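(* Let $S$ be a finite semigroup with an anti-involution $*$, let $R$ be a commutative ring with $1$, and let $\alpha$ be a twisting from $S$ into $R$ with $\alpha(x,y)=\alpha(y^*,x^* )$ for all $x,y\in S$. Suppose that for each $\mathcal D$-class $D$ there is an idempotent $1_D\in D$ with $1_D^*=1_D$; let $G_D$ be the $\mathcal H$-class of $1_D$. Suppose that $\alpha(x,y)=\alpha(x,z)$ for all $x,y,z\in S$ with $y\,\mathcal R\,z$. Suppose that for each $D$ the (untwisted) group algebra $R[G_D]$ is cellular with cell datum $(\Lambda_D,M_D,C,* )$, where $*$ is the linear extension of $*|_{G_D}$, and write $C^\lambda_{st}=\sum_{g\in G_D}c^\lambda_{st}(g)g$. Let $\mathcal D$ be the set of $\mathcal D$-classes, $\mathcal L_D$ the set of $\mathcal L$-classes in $D$, $\Lambda=\{(D,\lambda)\mid D\in\mathcal D,\lambda\in\Lambda_D\}$ ordered by $(D_1,\lambda_1)\le(D_2,\lambda_2)$ iff $D_1<_{\mathcal D}D_2$ or ($D_1=D_2$ and $\lambda_1\le\lambda_2$ in $\Lambda_{D_1}$), $M(D,\lambda)=\mathcal L_D\times M_D(\lambda)$, choose for each $L\in\mathcal L_D$ an element $u_L\in L$ with $u_L\,\mathcal R\,1_D$, and set \[C^{(D,\lambda)}_{(L,s)(K,t)}=\sum_{g\in G_D}c^\lambda_{st}(g)\,(u_L^*gu_K)\in R^\alpha[S].\] Then $R^\alpha[S]$ is cellular with cell datum $(\Lambda,M,C,* )$, where $*$ is the linear extension of $*$ to $R^\alpha[S]$.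
   Context: Green's relations on a semigroup $S$ ($S^1$ = $S$ with identity adjoined): $x\le_{\mathcal R}y$ iff $x\in yS^1$; $x\le_{\mathcal L}y$ iff $x\in S^1y$; $x\le_{\mathcal J}y$ iff $x\in S^1yS^1$; $\mathcal R,\mathcal L,\mathcal J$ the associated equivalences; $\mathcal H=\mathcal R\cap\mathcal L$; $\mathcal D$ generated by $\mathcal R\cup\mathcal L$. For finite $S$, $\mathcal D=\mathcal J$ and $\le_{\mathcal J}$ induces a partial order $\le_{\mathcal D}$ on $\mathcal D$-classes; $<_{\mathcal D}$ is its strict version. An anti-involution of $S$: $(x^* )^*=x$, $(xy)^*=y^*x^*$. A twisting $\alpha:S\times S\to R$ satisfies $\alpha(x,y)\alpha(xy,z)=\alpha(x,yz)\alpha(y,z)$; $R^\alpha[S]$ is the free $R$-module on $S$ with product $x\cdot y=\alpha(x,y)(xy)$. An anti-involution of an $R$-algebra is $R$-linear with $(a^* )^*=a$, $(ab)^*=b^*a^*$. Cellular algebra with cell datum $(\Lambda,M,C,* )$: (C1) $\Lambda$ finite poset, finite sets $M(\lambda)$, and $\{C^\lambda_{st}\}$ an $R$-basis; (C2) $*$ anti-involution with $(C^\lambda_{st})^*=C^\lambda_{ts}$; (C3) for all $\lambda,s,a$ there are $r_a(s',s)\in R$ with $aC^\lambda_{st}\in\sum_{s'}r_a(s',s)C^\lambda_{s't}+A(<\lambda)$ for all $t$, where $A(<\lambda)$ is the span of the $C^\mu_{s''t''}$ with $\mu<\lambda$. *)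

(* Defs.v *)
From HB Require Import structures.
From mathcomp Require Import all_boot all_order all_algebra.
Set Implicit Arguments. Unset Strict Implicit. Unset Printing Implicit Defensive.
Import GRing.Theory.
Local Open Scope ring_scope.

(* An element a : {ffun T -> R} is the formal combination sum_x a x x. *)
Section Alg.
Variables (R : comPzRingType) (T : finType).

Definition tw_mul (mr : T -> T -> T -> bool) (tw : T -> T -> R)
  (a b : {ffun T -> R}) : {ffun T -> R} :=
  [ffun z => \sum_(x : T) \sum_(y : T | mr x y z) tw x y * a x * b y].

Definition st_ext (sr : T -> T -> bool) (a : {ffun T -> R}) : {ffun T -> R} :=
  [ffun z => \sum_(x : T | sr x z) a x].

Definition fscale (k : R) (a : {ffun T -> R}) : {ffun T -> R} :=
  [ffun z => k * a z].

Definition delta (x : T) : {ffun T -> R} := [ffun z => (z == x)%:R].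

Definition cellular (mul : {ffun T -> R} -> {ffun T -> R} -> {ffun T -> R})
  (star : {ffun T -> R} -> {ffun T -> R})
  (Lam : finType) (le : rel Lam) (M : Lam -> finType)
  (C : forall l : Lam, M l -> M l -> {ffun T -> R}) : Prop :=
  let lc (P : pred Lam) (coef : forall l : Lam, M l -> M l -> R) : {ffun T -> R} :=
    [ffun z => \sum_(l : Lam | P l) \sum_(s : M l) \sum_(t : M l) coef l s t * C l s t z] in
  [/\ (forall l, le l l),
      (forall l m, le l m -> le m l -> l = m) &
      (forall l m n, le l m -> le m n -> le l n)] /\
      (forall coef : forall l : Lam, M l -> M l -> R,
          lc predT coef = 0 -> forall l s t, coef l s t = 0) /\
      (forall v : {ffun T -> R}, exists coef, v = lc predT coef) /\
      [/\ (forall a b, star (a + b) = star a + star b),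
          (forall k a, star (fscale k a) = fscale k (star a)),
          (forall a, star (star a) = a),
          (forall a b, star (mul a b) = mul (star b) (star a)) &
          (forall l s t, star (C l s t) = C l t s)] /\
      (forall (l : Lam) (s : M l) (a : {ffun T -> R}),
         exists r : M l -> R, forall t : M l,
           exists coef : forall m : Lam, M m -> M m -> R,
             mul a (C l s t) =
               [ffun z => \sum_(s' : M l) r s' * C l s' t z]
               + lc (fun m => le m l && (m != l)) coef).

End Alg.

Section Green.
Variables (S : finType) (mul : S -> S -> S).

(* x <=_R y iff x \in y S^1, etc. *)
Definition leRg (x y : S) : bool := (x == y) || [exists s, x == mul y s].
Definition leLg (x y : S) : bool := (x == y) || [exists s, x == mul s y].
Definition leJg (x y : S) : bool :=
  [|| x == y, [exists s, x == mul s y], [exists t, x == mul y t]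
    | [exists s, exists t, x == mul (mul s y) t]].

Definition Rg (x y : S) : bool := leRg x y && leRg y x.
Definition Lg (x y : S) : bool := leLg x y && leLg y x.
Definition Hg (x y : S) : bool := Rg x y && Lg x y.
Definition Dg (x y : S) : bool := connect (fun a b => Rg a b || Lg a b) x y.

Definition Dclass (x : S) : {set S} := [set y | Dg x y].
Definition Lclass (x : S) : {set S} := [set y | Lg x y].
Definition Hclass (x : S) : {set S} := [set y | Hg x y].
Definition Dclasses : {set {set S}} := [set Dclass x | x : S].
Definition Lclasses_in (D : {set S}) : {set {set S}} := [set Lclass x | x in D].

Definition leD (D1 D2 : {set S}) : bool :=
  [exists x in D1, exists y in D2, leJg x y].
Definition ltD (D1 D2 : {set S}) : bool := (D1 != D2) && leD D1 D2.

Definition DCl : finType := {D : {set S} | D \in Dclasses}.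
Definition LCl (D : {set S}) : finType := {L : {set S} | L \in Lclasses_in D}.

End Green.

Section Cor.
Variables (S : finType) (mul : S -> S -> S) (star : S -> S).
Variable (one : {set S} -> S).

Definition GD (D : {set S}) : {set S} := Hclass mul (one D).
Definition GT (D : {set S}) : finType := {g : S | g \in GD D}.

Variable (R : comPzRingType).

Definition gmul (D : {set S}) := @tw_mul R (GT D)
  (fun x y z => mul (val x) (val y) == val z) (fun _ _ => 1).
Definition gstar (D : {set S}) := @st_ext R (GT D)
  (fun x z => star (val x) == val z).

Definition smul (alpha : S -> S -> R) := @tw_mul R S (fun x y z => mul x y == z) alpha.
Definition sstar := @st_ext R S (fun x z => star x == z).

Variables (Lam : {set S} -> finType) (leLam : forall D, rel (Lam D))
  (M : forall D, Lam D -> finType).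

Definition BigLam : finType := {D : DCl mul & Lam (val D)}.

Definition leBig (p q : BigLam) : bool :=
  ltD mul (val (tag p)) (val (tag q))
  || ((tag p == tag q) && leLam (tagged p) (tagged_as p q)).

Definition BigM (p : BigLam) : finType :=
  (LCl mul (val (tag p)) * M (tagged p))%type.

Variables (c : forall D (l : Lam D), M l -> M l -> {ffun GT D -> R})
  (u : {set S} -> S).

Definition BigC (p : BigLam) (x y : BigM p) : {ffun S -> R} :=
  \sum_(g : GT (val (tag p)))
     fscale (c x.2 y.2 g) (delta R (mul (mul (star (u (val x.1))) (val g)) (u (val y.1)))).

End Cor.

Arguments tw_mul : clear implicits.
Arguments st_ext : clear implicits.
Arguments fscale : clear implicits.
Arguments delta : clear implicits.
Arguments cellular : clear implicits.
Arguments GD : clear implicits.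
Arguments GT : clear implicits.
Arguments gmul : clear implicits.
Arguments gstar : clear implicits.
Arguments smul : clear implicits.
Arguments sstar : clear implicits.
Arguments BigLam : clear implicits.
Arguments leBig : clear implicits.
Arguments BigM : clear implicits.
Arguments BigC : clear implicits.

(* Main.v *)
Require Import Defs.
From HB Require Import structures.
From mathcomp Require Import all_boot all_order all_algebra.
From mathcomp Require Import zify.
From Stdlib Require Import ClassicalEpsilon.
Import GRing.Theory.

Set Implicit Arguments. Unset Strict Implicit. Unset Printing Implicit Defensive.

Section GreenA.
Variables (S : finType) (mul : S -> S -> S).
Hypothesis mulA : forall x y z, mul x (mul y z) = mul (mul x y) z.

Definition lm (p : option S) y := if p is Some s then mul s y else y.
Definition rm y (q : option S) := if q is Some s then mul y s else y.

Lemma leRgP x y : reflect (exists q, x = rm y q) (leRg mul x y).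
Proof.
apply: (iffP orP) => [[/eqP->|/existsP[s /eqP->]]|[[s|] ->]].
- by exists None.
- by exists (Some s).
- by right; apply/existsP; exists s.
- by left.
Qed.

Lemma leLgP x y : reflect (exists p, x = lm p y) (leLg mul x y).
Proof.
apply: (iffP orP) => [[/eqP->|/existsP[s /eqP->]]|[[s|] ->]].
- by exists None.
- by exists (Some s).
- by right; apply/existsP; exists s.
- by left.
Qed.

Lemma leJgP x y : reflect (exists p q, x = rm (lm p y) q) (leJg mul x y).
Proof.
rewrite /leJg; apply: (iffP idP).
  case/or4P => [/eqP->|/existsP[s /eqP->]|/existsP[t /eqP->]|/existsP[s /existsP[t /eqP->]]].
  - by exists None, None.
  - by exists (Some s), None.
  - by exists None, (Some t).
  - by exists (Some s), (Some t).
move=> [[s|] [[t|] ->]] /=.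
- by apply/or4P; constructor 4; apply/existsP; exists s; apply/existsP; exists t.
- by apply/or4P; constructor 2; apply/existsP; exists s.
- by apply/or4P; constructor 3; apply/existsP; exists t.
- by apply/or4P; constructor 1.
Qed.

Lemma lm_mul p x y : lm p (mul x y) = mul (lm p x) y.
Proof. by case: p => //= s; rewrite mulA. Qed.
Lemma rm_mul x y q : rm (mul x y) q = mul x (rm y q).
Proof. by case: q => //= s; rewrite mulA. Qed.
Lemma lm_rm p y q : lm p (rm y q) = rm (lm p y) q.
Proof. by case: p => [s|]; case: q => [t|] //=; rewrite mulA. Qed.
Lemma lm_comp p p' y : exists p'', lm p (lm p' y) = lm p'' y.
Proof.
case: p => [s|]; case: p' => [s'|] /=.
- by exists (Some (mul s s')); rewrite mulA.
- by exists (Some s).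
- by exists (Some s').
- by exists None.
Qed.
Lemma rm_comp y q q' : exists q'', rm (rm y q') q = rm y q''.
Proof.
case: q => [s|]; case: q' => [s'|] /=.
- by exists (Some (mul s' s)); rewrite -mulA.
- by exists (Some s).
- by exists (Some s').
- by exists None.
Qed.

Lemma leR_refl x : leRg mul x x. Proof. by rewrite /leRg eqxx. Qed.
Lemma leL_refl x : leLg mul x x. Proof. by rewrite /leLg eqxx. Qed.
Lemma leJ_refl x : leJg mul x x. Proof. by rewrite /leJg eqxx. Qed.

Lemma leR_trans x y z : leRg mul x y -> leRg mul y z -> leRg mul x z.
Proof.
move=> /leRgP[q ->] /leRgP[q' ->]; have [q'' ->] := rm_comp z q q'.
by apply/leRgP; exists q''.
Qed.
Lemma leL_trans x y z : leLg mul x y -> leLg mul y z -> leLg mul x z.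
Proof.
move=> /leLgP[q ->] /leLgP[q' ->]; have [q'' ->] := lm_comp q q' z.
by apply/leLgP; exists q''.
Qed.
Lemma leJ_trans x y z : leJg mul x y -> leJg mul y z -> leJg mul x z.
Proof.
move=> /leJgP[p [q ->]] /leJgP[p' [q' ->]].
rewrite lm_rm; have [q'' ->] := rm_comp (lm p (lm p' z)) q q'.
have [p'' ->] := lm_comp p p' z.
by apply/leJgP; exists p'', q''.
Qed.
Lemma leR_J x y : leRg mul x y -> leJg mul x y.
Proof. by move=> /leRgP[q ->]; apply/leJgP; exists None, q. Qed.
Lemma leL_J x y : leLg mul x y -> leJg mul x y.
Proof. by move=> /leLgP[p ->]; apply/leJgP; exists p, None. Qed.

Lemma leR_mul x s : leRg mul (mul x s) x.
Proof. by apply/leRgP; exists (Some s). Qed.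
Lemma leL_mul x s : leLg mul (mul s x) x.
Proof. by apply/leLgP; exists (Some s). Qed.

Lemma Rg_refl x : Rg mul x x. Proof. by rewrite /Rg leR_refl. Qed.
Lemma Lg_refl x : Lg mul x x. Proof. by rewrite /Lg leL_refl. Qed.
Lemma Rg_sym x y : Rg mul x y = Rg mul y x. Proof. by rewrite /Rg andbC. Qed.
Lemma Lg_sym x y : Lg mul x y = Lg mul y x. Proof. by rewrite /Lg andbC. Qed.
Lemma Rg_trans x y z : Rg mul x y -> Rg mul y z -> Rg mul x z.
Proof.
by move=> /andP[a b] /andP[c d]; rewrite /Rg (leR_trans a c) (leR_trans d b).
Qed.
Lemma Lg_trans x y z : Lg mul x y -> Lg mul y z -> Lg mul x z.
Proof.
by move=> /andP[a b] /andP[c d]; rewrite /Lg (leL_trans a c) (leL_trans d b).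
Qed.

Lemma leR_lcong z x y : leRg mul x y -> leRg mul (mul z x) (mul z y).
Proof. by move=> /leRgP[q ->]; apply/leRgP; exists q; rewrite rm_mul. Qed.
Lemma leL_rcong z x y : leLg mul x y -> leLg mul (mul x z) (mul y z).
Proof. by move=> /leLgP[q ->]; apply/leLgP; exists q; rewrite lm_mul. Qed.
Lemma Rg_lcong z x y : Rg mul x y -> Rg mul (mul z x) (mul z y).
Proof. by move=> /andP[a b]; rewrite /Rg !leR_lcong. Qed.
Lemma Lg_rcong z x y : Lg mul x y -> Lg mul (mul x z) (mul y z).
Proof. by move=> /andP[a b]; rewrite /Lg !leL_rcong. Qed.

Definition RL (a b : S) := Rg mul a b || Lg mul a b.
Lemma RL_sym : symmetric RL.
Proof. by move=> a b; rewrite /RL Rg_sym Lg_sym. Qed.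

Lemma Dg_sym x y : Dg mul x y = Dg mul y x.
Proof. exact: (sym_connect_sym RL_sym). Qed.
Lemma Dg_trans x y z : Dg mul x y -> Dg mul y z -> Dg mul x z.
Proof. exact: connect_trans. Qed.
Lemma Dg_refl x : Dg mul x x. Proof. exact: connect0. Qed.
Lemma Rg_Dg x y : Rg mul x y -> Dg mul x y.
Proof. by move=> h; apply: connect1; rewrite /RL h. Qed.
Lemma Lg_Dg x y : Lg mul x y -> Dg mul x y.
Proof. by move=> h; apply: connect1; rewrite /RL h orbT. Qed.

Lemma Dg_J x y : Dg mul x y -> leJg mul x y && leJg mul y x.
Proof.
move=> /connectP[p]; elim: p x => [|z p IH] x /=; first by move=> _ ->; rewrite leJ_refl.
move=> /andP[exz pz] hy; have /andP[h1 h2] := IH z pz hy.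
have [hxz hzx] : leJg mul x z /\ leJg mul z x.
  case/orP: exz => /andP[a b]; first by rewrite !leR_J.
  by rewrite !leL_J.
by rewrite (leJ_trans hxz h1) (leJ_trans h2 hzx).
Qed.

Definition pw (q : S) n := iter n (mul q) q.
Lemma pw_add q n m : mul (pw q n) (pw q m) = pw q (n + m).+1.
Proof. by elim: n => [|n IH] //=; rewrite -mulA IH. Qed.
Lemma pwSr q n : pw q n.+1 = mul (pw q n) q.
Proof. by rewrite (pw_add q n 0) addn0. Qed.
Lemma pw_addl q n x : pw q (x + n) = iter x (mul q) (pw q n).
Proof. by rewrite /pw iterD. Qed.

Lemma idem_pw q : exists k, mul (pw q k) (pw q k) = pw q k.
Proof.
pose f (i : 'I_(#|S|).+1) := pw q i.
have : ~~ injectiveb f.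
  apply/negP => /injectiveP/leq_card; rewrite card_ord ltnn //.
case/injectivePn => i [j nij].
wlog lij : i j nij / (i < j)%N.
  move=> W; case: (ltngtP i j) => [h|h|h] eqf.
  - exact: W eqf.
  - by apply: (W j i) => //; rewrite eq_sym.
  - by move: nij; rewrite -val_eqE /= h eqxx.
rewrite /f => eqij; set d := (j - i)%N.
have per1 x : pw q (j + x) = pw q (i + x).
  by rewrite ![(_ + x)%N]addnC !pw_addl eqij.
have per t x : pw q (i + x + d * t) = pw q (i + x).
  elim: t => [|t IH]; first by rewrite muln0 addn0.
  have -> : (i + x + d * t.+1 = j + (x + d * t))%N.
    rewrite /d mulnS; lia.
  by rewrite per1 addnA IH.
have dpos : (0 < d)%N by rewrite /d subn_gt0.
exists (i.+1 * d).-1; rewrite pw_add.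
set k := (i.+1 * d).-1.
have hk : (k.+1 = i.+1 * d)%N by rewrite /k prednK // muln_gt0.
have ik : (i <= k)%N.
  by rewrite -ltnS hk leq_pmulr.
have -> : ((k + k).+1 = i + (k - i) + d * i.+1)%N.
  rewrite mulnC -hk; lia.
by rewrite per; congr pw; lia.
Qed.

Lemma core a w q : w = mul (mul a w) q -> exists p, w = lm p (mul a w).
Proof.
move=> hw.
have hk k : w = mul (pw a k) (mul w (pw q k)).
  elim: k => [|k IH]; first by rewrite {1}hw /= -mulA.
  by rewrite pwSr {1}IH {1}hw !mulA.
have [k hk2] := idem_pw q.
have hwE : mul w (pw q k) = w.
  by rewrite {1}(hk k) -!mulA hk2 -(hk k).
have hw2 : w = mul (pw a k) w by rewrite {1}(hk k) hwE.
case: k {hk hk2 hwE} hw2 => [|k] hw2; first by exists None.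
by exists (Some (pw a k)); rewrite /= mulA -pwSr.
Qed.

Lemma stabL x w : leJg mul w (mul x w) -> leLg mul w (mul x w).
Proof.
move/leJgP => [p [q hw]]; rewrite lm_mul in hw; apply/leLgP.
case: q hw => [q|] /= hw.
  have [p' hp'] := core hw.
  have [p'' hp''] := lm_comp p' p x.
  by exists p''; rewrite {1}hp' !lm_mul hp''.
by exists p; rewrite lm_mul.
Qed.

End GreenA.

Section Flip.
Variables (S : finType) (mul : S -> S -> S).
Hypothesis mulA : forall x y z, mul x (mul y z) = mul (mul x y) z.
Let mulf := fun a b => mul b a.
Lemma mulfA : forall x y z, mulf x (mulf y z) = mulf (mulf x y) z.
Proof. by move=> x y z; rewrite /mulf mulA. Qed.
Lemma leJ_flip x y : leJg mul x y -> leJg mulf x y.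
Proof.
move=> /leJgP [p [q ->]]; apply/leJgP; exists q, p.
by case: p => [s|]; case: q => [t|] //=; rewrite /mulf mulA.
Qed.
Lemma stabR w x : leJg mul w (mul w x) -> leRg mul w (mul w x).
Proof. by move=> h; exact: (stabL mulfA (leJ_flip h)). Qed.
End Flip.

Section GreenB.
Variables (S : finType) (mul : S -> S -> S).
Hypothesis mulA : forall x y z, mul x (mul y z) = mul (mul x y) z.

Lemma JD x y : leJg mul x y -> leJg mul y x -> Dg mul x y.
Proof.
move=> hxy hyx; move/leJgP: (hxy) => [p [q hx]].
rewrite -(lm_rm mulA) in hx.
have Ryq : Rg mul (rm mul y q) y.
  case: q hx => [q|] /= hx; last exact: Rg_refl.
  rewrite /Rg leR_mul /=; apply: stabR => //.
  apply: leJ_trans hyx _ => //; apply: leL_J => //; apply/leLgP.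
  by exists p; rewrite hx.
have Lx : Lg mul x (rm mul y q).
  move: hx Ryq; move: (rm mul y q) => yq hx Ryq.
  case: p hx => [p|] /= hx; last by rewrite hx Lg_refl.
  rewrite /Lg hx leL_mul /=; apply: stabL => //; rewrite -hx.
  exact: (leJ_trans mulA) (leR_J (andP Ryq).1) hyx.
exact: Dg_trans (Lg_Dg Lx) (Rg_Dg Ryq).
Qed.

Lemma Dg_leJ x y : Dg mul x y -> leJg mul x y.
Proof. by move/(Dg_J mulA)/andP=> []. Qed.

Lemma Dclass_eq x y : Dg mul x y -> Dclass mul x = Dclass mul y.
Proof.
move=> h; apply/setP => z; rewrite !inE; apply/idP/idP => hz.
  by apply: Dg_trans hz; rewrite Dg_sym.
exact: Dg_trans h hz.
Qed.

Lemma Dclass_mem D x : D \in Dclasses mul -> x \in D -> D = Dclass mul x.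
Proof.
move=> /imsetP[z _ ->]; rewrite inE => h; exact: Dclass_eq.
Qed.

Lemma Dclass_in x : x \in Dclass mul x.
Proof. by rewrite inE Dg_refl. Qed.

Lemma Dclasses_disj D1 D2 x : D1 \in Dclasses mul -> D2 \in Dclasses mul ->
  x \in D1 -> x \in D2 -> D1 = D2.
Proof. by move=> h1 h2 x1 x2; rewrite (Dclass_mem h1 x1) (Dclass_mem h2 x2). Qed.

Lemma mem_Dg D x y : D \in Dclasses mul -> x \in D -> y \in D -> Dg mul x y.
Proof. by move=> hD hx; rewrite (Dclass_mem hD hx) inE. Qed.

Lemma leD_trans D1 D2 D3 : D2 \in Dclasses mul ->
  leD mul D1 D2 -> leD mul D2 D3 -> leD mul D1 D3.
Proof.
move=> h2 /existsP[x1 /andP[hx1 /existsP[y2 /andP[hy2 j1]]]].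
move=> /existsP[x2 /andP[hx2 /existsP[y3 /andP[hy3 j2]]]].
apply/existsP; exists x1; rewrite hx1 /=; apply/existsP; exists y3; rewrite hy3 /=.
apply: leJ_trans j1 _ => //; apply: leJ_trans j2 => //.
exact/Dg_leJ/(mem_Dg h2).
Qed.

Lemma leD_anti D1 D2 : D1 \in Dclasses mul -> D2 \in Dclasses mul ->
  leD mul D1 D2 -> leD mul D2 D1 -> D1 = D2.
Proof.
move=> h1 h2 /existsP[x1 /andP[hx1 /existsP[y2 /andP[hy2 j1]]]].
move=> /existsP[x2 /andP[hx2 /existsP[y1 /andP[hy1 j2]]]].
have : Dg mul x1 y2.
  apply: JD => //; apply: leJ_trans (Dg_leJ (mem_Dg h2 hy2 hx2)) _ => //.
  apply: leJ_trans j2 _ => //; exact/Dg_leJ/(mem_Dg h1).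
move/Dclass_eq => e.
by rewrite (Dclass_mem h1 hx1) (Dclass_mem h2 hy2) e.
Qed.

End GreenB.


Section Struct.
Variables (S : finType) (mul : S -> S -> S) (star : S -> S) (one : {set S} -> S) (u : {set S} -> S).
Hypothesis mulA : forall x y z, mul x (mul y z) = mul (mul x y) z.
Hypothesis starK : forall x, star (star x) = x.
Hypothesis starM : forall x y, star (mul x y) = mul (star y) (star x).

Lemma lm_star p y : star (lm mul p y) = rm mul (star y) (omap star p).
Proof. by case: p => //= s; rewrite starM. Qed.
Lemma rm_star y q : star (rm mul y q) = lm mul (omap star q) (star y).
Proof. by case: q => //= s; rewrite starM. Qed.

Lemma leR_star x y : leRg mul x y -> leLg mul (star x) (star y).
Proof. by move/leRgP=> [q ->]; apply/leLgP; exists (omap star q); rewrite rm_star. Qed.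
Lemma leL_star x y : leLg mul x y -> leRg mul (star x) (star y).
Proof. by move/leLgP=> [q ->]; apply/leRgP; exists (omap star q); rewrite lm_star. Qed.
Lemma Rg_star x y : Rg mul x y -> Lg mul (star x) (star y).
Proof. by move=> /andP[a b]; rewrite /Lg !leR_star. Qed.
Lemma Lg_star x y : Lg mul x y -> Rg mul (star x) (star y).
Proof. by move=> /andP[a b]; rewrite /Rg !leL_star. Qed.
Lemma Rg_starE x y : Rg mul (star x) (star y) = Lg mul x y.
Proof.
apply/idP/idP => [/Rg_star|/Lg_star //]; by rewrite !starK.
Qed.
Lemma Lg_starE x y : Lg mul (star x) (star y) = Rg mul x y.
Proof.
apply/idP/idP => [/Lg_star|/Rg_star //]; by rewrite !starK.
Qed.

Lemma Dg_star x y : Dg mul x y -> Dg mul (star x) (star y).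
Proof.
move=> /connectP[p]; elim: p x => [|z p IH] x /=; first by move=> _ ->; exact: Dg_refl.
move=> /andP[exz pz] hy; apply: Dg_trans (IH z pz hy).
by case/orP: exz => [/Rg_star/Lg_Dg|/Lg_star/Rg_Dg].
Qed.

Lemma Lclass_eq x y : Lg mul x y -> Lclass mul x = Lclass mul y.
Proof.
move=> h; apply/setP => z; rewrite !inE; apply/idP/idP => hz.
  by apply: (Lg_trans mulA) hz; rewrite Lg_sym.
exact: (Lg_trans mulA) h hz.
Qed.

Variable D : {set S}.
Hypothesis hD : D \in Dclasses mul.
Hypothesis one_in : one D \in D.
Hypothesis one_idem : mul (one D) (one D) = one D.
Hypothesis one_star : star (one D) = one D.
Hypothesis u_in : forall L, L \in Lclasses_in mul D -> u L \in L.
Hypothesis u_R : forall L, L \in Lclasses_in mul D -> Rg mul (u L) (one D).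

Local Notation e := (one D).

Lemma DclassE : D = Dclass mul e.
Proof. exact: Dclass_mem. Qed.

Lemma inD x : (x \in D) = Dg mul e x.
Proof. by rewrite {1}DclassE inE. Qed.

Lemma star_inD x : x \in D -> star x \in D.
Proof. by rewrite !inD => /Dg_star; rewrite one_star. Qed.

Lemma Lclass_in x : x \in Lclass mul x.
Proof. by rewrite inE Lg_refl. Qed.

Lemma LclassesP L : L \in Lclasses_in mul D -> L = Lclass mul (u L).
Proof.
move=> hL; have := u_in hL; case/imsetP: hL => y _ ->.
by rewrite inE => /Lclass_eq.
Qed.

Lemma Lclass_inD x : x \in D -> Lclass mul x \in Lclasses_in mul D.
Proof. by move=> h; apply/imsetP; exists x. Qed.

Lemma uD L : L \in Lclasses_in mul D -> u L \in D.
Proof. by move=> hL; rewrite inD Dg_sym; apply: Rg_Dg; apply: u_R. Qed.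

Lemma e_idem_l x : leRg mul x e -> mul e x = x.
Proof. by move/leRgP => [[s|] ->] //=; rewrite mulA one_idem. Qed.
Lemma e_idem_r x : leLg mul x e -> mul x e = x.
Proof. by move/leLgP => [[s|] ->] //=; rewrite -mulA one_idem. Qed.

Lemma exR x : leRg mul e x -> exists t, mul x t = e.
Proof. by move/leRgP => [[s|] /= h]; [exists s | exists e; rewrite -h one_idem]. Qed.

Definition tt (x : S) : S := odflt e [pick t | mul x t == e].
Lemma ttP x : leRg mul e x -> mul x (tt x) = e.
Proof.
move=> /exR h; rewrite /tt; case: pickP => [t /eqP //|/= H].
by case: h => t ht; move: (H t); rewrite ht eqxx.
Qed.

Definition G := GD S mul one D.
Lemma inG g : (g \in G) = Rg mul e g && Lg mul e g.
Proof. by rewrite /G /GD /Hclass inE. Qed.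

Lemma G_l g : g \in G -> mul e g = g.
Proof. by rewrite inG => /andP[/andP[_ h] _]; apply: e_idem_l. Qed.
Lemma G_r g : g \in G -> mul g e = g.
Proof. by rewrite inG => /andP[_ /andP[_ h]]; apply: e_idem_r. Qed.
Lemma G_inv g : g \in G -> mul g (tt g) = e.
Proof. by rewrite inG => /andP[/andP[h _] _]; apply: ttP. Qed.
Lemma G_star g : g \in G -> star g \in G.
Proof.
by rewrite !inG => /andP[a b]; rewrite -{1 2}one_star Rg_starE Lg_starE b a.
Qed.
Lemma G_mul g h : g \in G -> h \in G -> mul g h \in G.
Proof.
rewrite !inG => /andP[Rg_ Lg_] /andP[Rh Lh].
have R1 : Rg mul (mul g h) (mul g e) by apply: (Rg_lcong mulA); rewrite Rg_sym.
have L1 : Lg mul (mul g h) (mul e h) by apply: (Lg_rcong mulA); rewrite Lg_sym.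
rewrite G_r ?inG ?Rg_ ?Lg_ // in R1; rewrite G_l ?inG ?Rh ?Lh // in L1.
rewrite Rg_sym Lg_sym; apply/andP; split.
  by apply: (Rg_trans mulA) R1 _; rewrite Rg_sym.
by apply: (Lg_trans mulA) L1 _; rewrite Lg_sym.
Qed.
Lemma e_inG : e \in G.
Proof. by rewrite inG Rg_refl Lg_refl. Qed.

Section Lcl.
Variables L : {set S}.
Hypothesis hL : L \in Lclasses_in mul D.
Lemma uL_R : Rg mul (u L) e. Proof. exact: u_R. Qed.
Lemma e_u : mul e (u L) = u L.
Proof. by apply: e_idem_l; case/andP: uL_R. Qed.
Lemma u_tt : mul (u L) (tt (u L)) = e.
Proof. by apply: ttP; case/andP: uL_R. Qed.
Lemma us_e : mul (star (u L)) e = star (u L).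
Proof. by rewrite -{1}one_star -starM e_u. Qed.
Lemma tts_us : mul (star (tt (u L))) (star (u L)) = e.
Proof. by rewrite -starM u_tt one_star. Qed.
Lemma usD : star (u L) \in D.
Proof. exact/star_inD/uD. Qed.
End Lcl.

Definition blk L g K := mul (mul (star (u L)) g) (u K).

Lemma blk_R L g K : L \in Lclasses_in mul D -> K \in Lclasses_in mul D -> g \in G ->
  Rg mul (blk L g K) (star (u L)).
Proof.
move=> hL hK hg; apply/andP; split.
  by rewrite /blk -mulA leR_mul.
apply/leRgP; exists (Some (mul (tt (u K)) (tt g))) => /=.
by rewrite /blk -!mulA (mulA (u K)) u_tt // (mulA g) G_r // G_inv // us_e.
Qed.

Lemma blk_star L g K : star (blk L g K) = blk K (star g) L.
Proof. by rewrite /blk !starM starK mulA. Qed.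

Lemma blk_L L g K : L \in Lclasses_in mul D -> K \in Lclasses_in mul D -> g \in G ->
  Lg mul (blk L g K) (u K).
Proof.
move=> hL hK hg; rewrite -Rg_starE blk_star; apply: blk_R => //.
exact: G_star.
Qed.

Lemma blkD L g K : L \in Lclasses_in mul D -> K \in Lclasses_in mul D -> g \in G ->
  blk L g K \in D.
Proof.
move=> hL hK hg; rewrite inD; apply: Dg_trans (_ : Dg mul e (star (u L))) _.
  by rewrite -inD usD.
by rewrite Dg_sym; apply: Rg_Dg; apply: blk_R.
Qed.

Lemma blk_recover L g K : L \in Lclasses_in mul D -> K \in Lclasses_in mul D -> g \in G ->
  mul (mul (star (tt (u L))) (blk L g K)) (tt (u K)) = g.
Proof.
move=> hL hK hg; rewrite /blk !mulA tts_us // G_l // -mulA u_tt //.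
exact: G_r.
Qed.

Lemma Lcl_inj L L' : L \in Lclasses_in mul D -> L' \in Lclasses_in mul D ->
  Lg mul (u L) (u L') -> L = L'.
Proof.
by move=> hL hL' h; rewrite (LclassesP hL) (LclassesP hL') (Lclass_eq h).
Qed.

Lemma blk_inj L g K L' g' K' :
  L \in Lclasses_in mul D -> K \in Lclasses_in mul D -> g \in G ->
  L' \in Lclasses_in mul D -> K' \in Lclasses_in mul D -> g' \in G ->
  blk L g K = blk L' g' K' -> [/\ L = L', K = K' & g = g'].
Proof.
move=> hL hK hg hL' hK' hg' eb.
have eL : L = L'.
  apply: Lcl_inj => //; rewrite -Rg_starE.
  apply: (Rg_trans mulA) (_ : Rg mul _ (blk L g K)) _; first by rewrite Rg_sym blk_R.
  rewrite eb; exact: blk_R.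
have eK : K = K'.
  apply: Lcl_inj => //.
  apply: (Lg_trans mulA) (_ : Lg mul _ (blk L g K)) _; first by rewrite Lg_sym blk_L.
  rewrite eb; exact: blk_L.
subst L' K'; split => //.
by have := blk_recover hL hK hg; rewrite eb blk_recover.
Qed.

Definition gof x := mul (mul (star (tt (u (Lclass mul (star x))))) x) (tt (u (Lclass mul x))).

Lemma gof_star x : star (gof x) = gof (star x).
Proof. by rewrite /gof !starM !starK mulA. Qed.

Lemma blk_gof x : x \in D -> blk (Lclass mul (star x)) (gof x) (Lclass mul x) = x.
Proof.
move=> hx; set L := Lclass mul (star x); set K := Lclass mul x.
have hL : L \in Lclasses_in mul D by apply/Lclass_inD/star_inD.
have hK : K \in Lclasses_in mul D by apply/Lclass_inD.
have xK : Lg mul x (u K) by have := u_in hK; rewrite inE.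
have xL : Rg mul x (star (u L)).
  by rewrite -Lg_starE starK; have := u_in hL; rewrite inE.
have h1 : mul (mul x (tt (u K))) (u K) = x.
  case/andP: xK => /leLgP[p ->] _.
  by rewrite -!(lm_mul mulA) u_tt // e_u.
have h2 : mul (star (u L)) (mul (star (tt (u L))) x) = x.
  case/andP: xL => /leRgP[q ->] _.
  by rewrite -(rm_mul mulA) tts_us // -(rm_mul mulA) us_e.
by rewrite /blk /gof (mulA (star (u L))) h2 h1.
Qed.

Lemma gof_R x : x \in D -> Rg mul (gof x) e.
Proof.
move=> hx; set L := Lclass mul (star x); set K := Lclass mul x.
have hL : L \in Lclasses_in mul D by apply/Lclass_inD/star_inD.
have hK : K \in Lclasses_in mul D by apply/Lclass_inD.
have xK : Lg mul x (u K) by have := u_in hK; rewrite inE.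
have xL : Rg mul x (star (u L)).
  by rewrite -Lg_starE starK; have := u_in hL; rewrite inE.
have h1 : mul (mul x (tt (u K))) (u K) = x.
  case/andP: xK => /leLgP[p ->] _.
  by rewrite -!(lm_mul mulA) u_tt // e_u.
have a : leRg mul (mul (star (tt (u L))) x) e.
  case/andP: xL => /leRgP[q ->] _.
  by rewrite -(rm_mul mulA) // tts_us //; apply/leRgP; exists q.
apply/andP; split; first by apply: (leR_trans mulA) a => //; rewrite /gof leR_mul.
rewrite -(tts_us hL); apply: (leR_trans mulA) (_ : leRg mul _ (mul (star (tt (u L))) x)) _ => //.
  by apply: (leR_lcong mulA) => //; case/andP: xL.
by rewrite -{1}h1 !mulA; exact: leR_mul.
Qed.

Lemma gofG x : x \in D -> gof x \in G.
Proof.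
move=> hx; rewrite inG Rg_sym gof_R //= -one_star -(starK (gof x)) Lg_starE.
by rewrite gof_star Rg_sym gof_R // star_inD.
Qed.

End Struct.

Unset Implicit Arguments. Set Strict Implicit.
Local Open Scope ring_scope.

Section Gen.
Variables (R : comPzRingType) (T : finType).

Definition lcA (Lm : finType) (Mm : Lm -> finType)
  (C : forall l, Mm l -> Mm l -> {ffun T -> R}) (P : pred Lm)
  (coef : forall l, Mm l -> Mm l -> R) : {ffun T -> R} :=
  [ffun z => \sum_(l : Lm | P l) \sum_(s : Mm l) \sum_(t : Mm l) coef l s t * C l s t z].

Arguments lcA {Lm Mm} C P coef.

Lemma cell_elim mul star (Lam : finType) (le : rel Lam) (M : Lam -> finType) (C : forall l, M l -> M l -> {ffun T -> R}) : cellular R T mul star Lam le M C ->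
  [/\ (forall l, le l l),
      (forall l m, le l m -> le m l -> l = m) &
      (forall l m n, le l m -> le m n -> le l n)] /\
      (forall coef, lcA C predT coef = 0 -> forall l s t, coef l s t = 0) /\
      (forall v : {ffun T -> R}, exists coef, v = lcA C predT coef) /\
  [/\ (forall a b, star (a + b) = star a + star b),
      (forall k a, star (fscale R T k a) = fscale R T k (star a)),
      (forall a, star (star a) = a),
      (forall a b, star (mul a b) = mul (star b) (star a)) &
      (forall l s t, star (C l s t) = C l t s)] /\
      (forall (l : Lam) (s : M l) (a : {ffun T -> R}),
         exists r : M l -> R, forall t : M l,
           exists coef : forall m : Lam, M m -> M m -> R,
             mul a (C l s t) =
               [ffun z => \sum_(s' : M l) r s' * C l s' t z]
               + lcA C (fun m => le m l && (m != l)) coef).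
Proof. by []. Qed.

Lemma cell_intro mul star (Lam : finType) (le : rel Lam) (M : Lam -> finType) (C : forall l, M l -> M l -> {ffun T -> R}) :
  [/\ (forall l, le l l),
      (forall l m, le l m -> le m l -> l = m) &
      (forall l m n, le l m -> le m n -> le l n)] ->
      (forall coef, lcA C predT coef = 0 -> forall l s t, coef l s t = 0) ->
      (forall v : {ffun T -> R}, exists coef, v = lcA C predT coef) ->
  [/\ (forall a b, star (a + b) = star a + star b),
      (forall k a, star (fscale R T k a) = fscale R T k (star a)),
      (forall a, star (star a) = a),
      (forall a b, star (mul a b) = mul (star b) (star a)) &
      (forall l s t, star (C l s t) = C l t s)] ->
      (forall (l : Lam) (s : M l) (a : {ffun T -> R}),
         exists r : M l -> R, forall t : M l,
           exists coef : forall m : Lam, M m -> M m -> R,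
             mul a (C l s t) =
               [ffun z => \sum_(s' : M l) r s' * C l s' t z]
               + lcA C (fun m => le m l && (m != l)) coef) ->
  cellular R T mul star Lam le M C.
Proof. move=> h1 h2 h3 h4 h5; exact: (conj h1 (conj h2 (conj h3 (conj h4 h5)))). Qed.

Lemma lcA_mask (Lm : finType) (Mm : Lm -> finType) C (P : pred Lm) coef :
  lcA (Mm:=Mm) C P coef = lcA C predT (fun l s t => if P l then coef l s t else 0).
Proof.
apply/ffunP => z; rewrite !ffunE big_mkcond /=; apply: eq_bigr => l _.
by case: (P l) => //; rewrite big1 // => s _; rewrite big1 // => t _; rewrite mul0r.
Qed.

Lemma lcA_add (Lm : finType) (Mm : Lm -> finType) C (P : pred Lm) c1 c2 :
  lcA (Mm:=Mm) C P c1 + lcA C P c2 = lcA C P (fun l s t => c1 l s t + c2 l s t).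
Proof.
apply/ffunP => z; rewrite !ffunE -big_split; apply: eq_bigr => l _.
rewrite -big_split; apply: eq_bigr => s _; rewrite -big_split; apply: eq_bigr => t _.
by rewrite mulrDl.
Qed.

Lemma lcA_opp (Lm : finType) (Mm : Lm -> finType) C (P : pred Lm) c1 :
  - lcA (Mm:=Mm) C P c1 = lcA C P (fun l s t => - c1 l s t).
Proof.
apply/ffunP => z; rewrite !ffunE -sumrN; apply: eq_bigr => l _.
rewrite -sumrN; apply: eq_bigr => s _; rewrite -sumrN; apply: eq_bigr => t _.
by rewrite mulNr.
Qed.

Lemma lcA_scale (Lm : finType) (Mm : Lm -> finType) C (P : pred Lm) k c1 :
  fscale R T k (lcA (Mm:=Mm) C P c1) = lcA C P (fun l s t => k * c1 l s t).
Proof.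
apply/ffunP => z; rewrite !ffunE mulr_sumr; apply: eq_bigr => l _.
rewrite mulr_sumr; apply: eq_bigr => s _; rewrite mulr_sumr; apply: eq_bigr => t _.
by rewrite mulrA.
Qed.

Lemma lcA_sum (Lm : finType) (Mm : Lm -> finType) C (P : pred Lm) (I : finType)
    (cf : I -> forall l, Mm l -> Mm l -> R) :
  \sum_i lcA (Mm:=Mm) C P (cf i) = lcA C P (fun l s t => \sum_i cf i l s t).
Proof.
apply/ffunP => z; rewrite !ffunE sum_ffunE.
under eq_bigr do rewrite ffunE.
rewrite exchange_big; apply: eq_bigr => l _.
rewrite exchange_big; apply: eq_bigr => s _.
rewrite exchange_big; apply: eq_bigr => t _.
by rewrite mulr_suml.
Qed.

Lemma lcA_uniq (Lm : finType) (Mm : Lm -> finType) C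
  (indep : forall coef, lcA (Mm:=Mm) C predT coef = 0 -> forall l s t, coef l s t = 0)
  c1 c2 : lcA C predT c1 = lcA C predT c2 -> forall l s t, c1 l s t = c2 l s t.
Proof.
move=> h l s t; apply/eqP; rewrite -subr_eq0; apply/eqP.
apply: (indep (fun l s t => c1 l s t - c2 l s t)).
have -> : lcA C predT (fun l s t => c1 l s t - c2 l s t) =
  lcA C predT c1 - lcA C predT c2 by rewrite lcA_opp lcA_add.
by rewrite h subrr.
Qed.

End Gen.
Arguments lcA {R T Lm Mm} C P coef.
Arguments cell_elim {R T mul star Lam le M C}.
Arguments cell_intro {R T mul star Lam le M C}.
Arguments lcA_mask {R T Lm Mm} C P coef.
Arguments lcA_add {R T Lm Mm} C P c1 c2.
Arguments lcA_opp {R T Lm Mm} C P c1.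
Arguments lcA_scale {R T Lm Mm} C P k c1.
Arguments lcA_sum {R T Lm Mm} C P {I} cf.
Arguments lcA_uniq {R T Lm Mm C} indep c1 c2.


Section Main.
Variables (S : finType) (mul : S -> S -> S) (star : S -> S)
  (R : comPzRingType) (alpha : S -> S -> R)
  (one : {set S} -> S)
  (Lam : {set S} -> finType) (leLam : forall D, rel (Lam D))
  (M : forall D, Lam D -> finType)
  (c : forall D (l : Lam D), M D l -> M D l -> {ffun GT S mul one D -> R})
  (u : {set S} -> S).
Hypotheses (mulA : forall x y z, mul x (mul y z) = mul (mul x y) z)
  (starK : forall x, star (star x) = x)
  (starM : forall x y, star (mul x y) = mul (star y) (star x))
  (alpha_star : forall x y, alpha x y = alpha (star y) (star x))
  (one_in : forall D, D \in Dclasses mul -> one D \in D)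
  (one_idem : forall D, D \in Dclasses mul -> mul (one D) (one D) = one D)
  (one_star : forall D, D \in Dclasses mul -> star (one D) = one D)
  (alpha_R : forall x y z, Rg mul y z -> alpha x y = alpha x z)
  (cellG : forall D, D \in Dclasses mul ->
     cellular R (GT S mul one D) (gmul S mul one R D) (gstar S mul star one R D)
       (Lam D) (leLam D) (M D) (c D))
  (u_in : forall D L, D \in Dclasses mul -> L \in Lclasses_in mul D -> u L \in L)
  (u_R : forall D L, D \in Dclasses mul -> L \in Lclasses_in mul D ->
     Rg mul (u L) (one D)).

Set Implicit Arguments. Unset Strict Implicit.
Local Notation DC := (DCl mul).
Local Notation BL := (BigLam S mul Lam).
Local Notation BM := (BigM S mul Lam M).
Local Notation BC := (BigC S mul star one R Lam M c u).
Local Notation blkS := (blk mul star u).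
Local Notation leB := (leBig S mul Lam leLam).

Lemma oin (D : DC) : one (val D) \in val D. Proof. exact: one_in _ (valP D). Qed.
Lemma oid (D : DC) : mul (one (val D)) (one (val D)) = one (val D).
Proof. exact: one_idem _ (valP D). Qed.
Lemma ost (D : DC) : star (one (val D)) = one (val D).
Proof. exact: one_star _ (valP D). Qed.
Lemma uin (D : DC) : forall L, L \in Lclasses_in mul (val D) -> u L \in L.
Proof. move=> L; exact: u_in _ _ (valP D). Qed.
Lemma uR (D : DC) : forall L, L \in Lclasses_in mul (val D) -> Rg mul (u L) (one (val D)).
Proof. move=> L; exact: u_R _ _ (valP D). Qed.

Definition cellD (D : DC) := cell_elim (cellG _ (valP D)).

Lemma ltD_neq (D1 D2 : DC) : ltD mul (val D1) (val D2) -> D1 != D2.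
Proof. by case/andP => h _; apply: contra h => /eqP ->. Qed.

Lemma ltD_anti (D1 D2 : DC) : ltD mul (val D1) (val D2) -> ltD mul (val D2) (val D1) -> False.
Proof.
move=> /andP[h1 l1] /andP[_ l2].
by move: h1; rewrite (leD_anti mulA (valP D1) (valP D2) l1 l2) eqxx.
Qed.

Lemma ltD_trans (D1 D2 D3 : DC) : ltD mul (val D1) (val D2) -> ltD mul (val D2) (val D3) ->
  ltD mul (val D1) (val D3).
Proof.
rewrite /ltD => h12 h23; have l13 : leD mul (val D1) (val D3).
  apply: (leD_trans mulA (D2 := val D2)); [exact: (valP D2)|exact: (andP h12).2|exact: (andP h23).2].
rewrite l13 andbT; apply/eqP => e13.
rewrite e13 in h12; exact: (ltD_anti (D1:=D3) (D2:=D2) h12 h23).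
Qed.

Lemma leB_refl p : leB p p.
Proof.
case: p => D l; rewrite /leBig /= eqxx tagged_asE /=.
by have [[r _ _] _] := cellD D; rewrite r orbT.
Qed.

Lemma leB_anti p q : leB p q -> leB q p -> p = q.
Proof.
case: p => D l; case: q => D' l'; rewrite /leBig /=.
case/orP => [h1|/andP[/eqP e1 h1]] /orP[h2|/andP[/eqP e2 h2]].
- by case: (ltD_anti h1 h2).
- by subst D'; move: (ltD_neq h1); rewrite eqxx.
- by subst D'; move: (ltD_neq h2); rewrite eqxx.
- subst D'; rewrite !tagged_asE in h1 h2.
  by have [[_ a _] _] := cellD D; rewrite (a _ _ h1 h2).
Qed.

Lemma leB_trans p q r : leB p q -> leB q r -> leB p r.
Proof.
case: p => D l; case: q => D' l'; case: r => D'' l''; rewrite /leBig /=.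
case/orP => [h1|/andP[/eqP e1 h1]] /orP[h2|/andP[/eqP e2 h2]].
- by rewrite (ltD_trans h1 h2).
- by subst D''; rewrite h1.
- by subst D'; rewrite h2.
- subst D' D''; rewrite !tagged_asE in h1 h2 *.
  by have [[_ _ t] _] := cellD D; rewrite (t _ _ _ h1 h2) eqxx orbT.
Qed.

Lemma BC_val p x y z : BC p x y z =
  \sum_(g : GT S mul one (val (tag p))) c _ _ x.2 y.2 g * (z == blkS (val x.1) (val g) (val y.1))%:R.
Proof.
rewrite /BigC sum_ffunE; apply: eq_bigr => g _; by rewrite !ffunE.
Qed.


Local Notation GTD D := (GT S mul one (val D)).
Local Notation LC D := (LCl mul (val D)).

Lemma blkinj (D : DC) (L K L' K' : LC D) (g g' : GTD D) :
  blkS (val L) (val g) (val K) = blkS (val L') (val g') (val K') -> [/\ L = L', K = K' & g = g'].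
Proof.
move=> e; have [e1 e2 e3] := blk_inj mulA starK starM (@oid D) (@ost D) (@uin D) (@uR D)
  (valP L) (valP K) (valP g) (valP L') (valP K') (valP g') e.
by split; apply: val_inj.
Qed.

Lemma blkDD (D : DC) (L K : LC D) (g : GTD D) : blkS (val L) (val g) (val K) \in val D.
Proof. exact: (blkD mulA starM (valP D) (@oin D) (@oid D) (@ost D) (@uR D) (valP L) (valP K) (valP g)). Qed.

Lemma BC_out (p : BL) (a b : BM p) z :
  (forall g : GTD (tag p), z != blkS (val a.1) (val g) (val b.1)) -> BC p a b z = 0.
Proof.
by move=> h; rewrite BC_val big1 // => g _; rewrite (negbTE (h g)) mulr0.
Qed.

Lemma BC_blk (p : BL) (a b : BM p) (g0 : GTD (tag p)) :
  BC p a b (blkS (val a.1) (val g0) (val b.1)) = c _ _ a.2 b.2 g0.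
Proof.
rewrite BC_val (bigD1 g0) //= eqxx mulr1 big1 ?addr0 // => g ng.
case: eqP => [/blkinj [_ _ e]|_]; last by rewrite mulr0.
by move: ng; rewrite e eqxx.
Qed.

Lemma sum_BL (F : BL -> R) :
  \sum_(p : BL) F p = \sum_(D : DC) \sum_(l : Lam (val D)) F (Tagged (fun D : DC => Lam (val D)) l).
Proof.
rewrite (@sig_big_dep _ 0 +%R DC (fun D : DC => Lam (val D)) predT (fun _ _ => true)
  (fun D l => F (Tagged (fun D : DC => Lam (val D)) l))) /=.
by apply: eq_big => // -[D l].
Qed.

Lemma sum_pair (A B : finType) (F : A * B -> R) :
  \sum_(p : A * B) F p = \sum_(a : A) \sum_(b : B) F (a, b).
Proof. by rewrite pair_bigA; apply: eq_bigr => -[]. Qed.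

Lemma lcA_blk (P : pred BL) coef (D : DC) (Ls Ks : LC D) (g0 : GTD D) :
  lcA BC P coef (blkS (val Ls) (val g0) (val Ks)) =
  \sum_(l : Lam (val D) | P (Tagged (fun D : DC => Lam (val D)) l))
    \sum_(s : M _ l) \sum_(t : M _ l)
      coef (Tagged (fun D : DC => Lam (val D)) l) (Ls, s) (Ks, t) * c _ _ s t g0.
Proof.
rewrite ffunE big_mkcond sum_BL (bigD1 D) //= [X in _ + X]big1 ?addr0; last first.
  move=> D' nD'; apply: big1 => l _; case: ifP => // _.
  apply: big1 => a _; apply: big1 => b _; rewrite BC_out ?mulr0 // => g.
  apply/eqP => e; move: (blkDD Ls Ks g0); rewrite e => h.
  have := Dclasses_disj (valP D) (valP D') h (blkDD a.1 b.1 g).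
  by move/val_inj => eD; move: nD'; rewrite eD eqxx.
rewrite -big_mkcond /=; apply: eq_bigr => l _.
rewrite (sum_pair (A := LC D) (B := M _ l)) (bigD1 Ls) //= [X in _ + X]big1 ?addr0; last first.
  move=> a na; apply: big1 => s _; apply: big1 => b _; rewrite BC_out ?mulr0 // => g.
  by apply/eqP => /blkinj [e _ _]; move: na; rewrite e eqxx.
apply: eq_bigr => s _.
rewrite (sum_pair (A := LC D) (B := M _ l)) (bigD1 Ks) //= [X in _ + X]big1 ?addr0; last first.
  move=> b nb; apply: big1 => t _; rewrite BC_out ?mulr0 // => g.
  by apply/eqP => /blkinj [_ e _]; move: nb; rewrite e eqxx.
apply: eq_bigr => t _; congr (_ * _).
exact: (@BC_blk (Tagged (fun D : DC => Lam (val D)) l) (Ls, s) (Ks, t) g0).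
Qed.


Lemma blk_decomp z : exists D : DC, exists Ls Ks : LC D, exists g0 : GTD D,
  z = blkS (val Ls) (val g0) (val Ks).
Proof.
have hDz : Dclass mul z \in Dclasses mul by apply: imset_f.
pose D : DC := Sub (Dclass mul z) hDz.
have zD : z \in val D by exact: Dclass_in.
have hstar : star z \in val D := star_inD starM (valP D) (@oin D) (@ost D) zD.
exists D, (Sub (Lclass mul (star z)) (Lclass_inD mul hstar)), (Sub (Lclass mul z) (Lclass_inD mul zD)).
exists (Sub (gof mul star one u (val D) z) (gofG mulA starK starM (valP D) (@oin D) (@oid D) (@ost D) (@uin D) (@uR D) zD)).
by rewrite /= (blk_gof mulA starK starM (valP D) (@oin D) (@oid D) (@ost D) (@uin D) (@uR D) zD).
Qed.

Lemma indepB coef : lcA BC predT coef = 0 -> forall p a b, coef p a b = 0.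
Proof.
move=> h [D l] [Ls s] [Ks t].
have [_ [indep _]] := cellD D.
apply: (indep (fun l s t => coef (Tagged (fun D : DC => Lam (val D)) l) (Ls,s) (Ks,t))).
apply/ffunP => g0; rewrite !ffunE.
have := congr1 (fun f : {ffun S -> R} => f (blkS (val Ls) (val g0) (val Ks))) h.
by rewrite /= lcA_blk ffunE.
Qed.

Definition gcf (v : {ffun S -> R}) (D : DC) (Ls Ks : LC D) :=
  proj1_sig (constructive_indefinite_description _
    ((cellD D).2.2.1 [ffun g : GTD D => v (blkS (val Ls) (val g) (val Ks))])).

Lemma gcfP (v : {ffun S -> R}) (D : DC) (Ls Ks : LC D) : [ffun g : GTD D => v (blkS (val Ls) (val g) (val Ks))] =
  lcA (c (val D)) predT (gcf v Ls Ks).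
Proof. by rewrite /gcf; case: constructive_indefinite_description. Qed.

Definition cf (v : {ffun S -> R}) (p : BL) (a b : BM p) : R :=
  @gcf v (tag p) a.1 b.1 (tagged p) a.2 b.2.

Lemma cfP (v : {ffun S -> R}) : v = lcA BC predT (cf v).
Proof.
apply/ffunP => z; have [D [Ls [Ks [g0 ->]]]] := blk_decomp z.
rewrite lcA_blk /=.
have := congr1 (fun f : {ffun GTD D -> R} => f g0) (gcfP v Ls Ks); rewrite !ffunE => ->.
by [].
Qed.

Lemma spanB v : exists coef, v = lcA BC predT coef.
Proof. by exists (cf v); exact: cfP. Qed.


Local Notation sst := (sstar S star R).
Local Notation smu := (smul S mul R alpha).

Lemma sstarE (a : {ffun S -> R}) z : sst a z = a (star z).
Proof.
rewrite ffunE (big_pred1 (star z)) // => x /=.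
by apply/eqP/eqP => [<-|->]; rewrite starK.
Qed.

Lemma sstar_add a b : sst (a + b) = sst a + sst b.
Proof. by apply/ffunP => z; rewrite sstarE [RHS]ffunE !sstarE ffunE. Qed.

Lemma sstar_scale k a : sst (fscale R S k a) = fscale R S k (sst a).
Proof. by apply/ffunP => z; rewrite sstarE [RHS]ffunE !sstarE ffunE. Qed.

Lemma sstarK a : sst (sst a) = a.
Proof. by apply/ffunP => z; rewrite !sstarE starK. Qed.

Lemma smulE (a b : {ffun S -> R}) z :
  smu a b z = \sum_x \sum_y (if mul x y == z then alpha x y * a x * b y else 0).
Proof. by rewrite ffunE; apply: eq_bigr => x _; rewrite big_mkcond. Qed.

Lemma sstar_mul a b : sst (smu a b) = smu (sst b) (sst a).
Proof.
apply/ffunP => z; rewrite sstarE !smulE exchange_big.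
rewrite (reindex_inj (can_inj starK)); apply: eq_bigr => y _.
rewrite (reindex_inj (can_inj starK)); apply: eq_bigr => x _.
rewrite !sstarE -starM (inj_eq (can_inj starK)) -alpha_star.
case: eqP => // _; rewrite -!mulrA; congr (_ * _); exact: mulrC.
Qed.

Definition gst (D : DC) (g : GTD D) : GTD D :=
  Sub (star (val g)) (G_star starK starM (@ost D) (valP g)).

Lemma gstK (D : DC) (g : GTD D) : gst (gst g) = g.
Proof. by apply: val_inj; rewrite /= starK. Qed.

Lemma gstarE (D : DC) (f : {ffun GTD D -> R}) g : gstar S mul star one R (val D) f g = f (gst g).
Proof.
rewrite ffunE (big_pred1 (gst g)) // => x /=.
by rewrite -val_eqE /=; apply/eqP/eqP => [<-|->]; rewrite starK.
Qed.

Lemma sstar_BC p a b : sst (BC p a b) = BC p b a.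
Proof.
apply/ffunP => z; rewrite sstarE !BC_val.
case: p a b => D l a b /=.
have [_ [_ [_ [[_ _ _ _ cs] _]]]] := cellD D.
rewrite (reindex_inj (can_inj (@gstK D))); apply: eq_bigr => g _.
rewrite -(cs _ a.2 b.2) gstarE; congr (_ * _).
have E : blkS (val a.1) (star (val g)) (val b.1) = star (blkS (val b.1) (val g) (val a.1)).
  by rewrite (blk_star u mulA starK starM).
by rewrite /= E (inj_eq (can_inj starK)).
Qed.


Local Notation del := (delta R S).

Lemma sum_ind (T : finType) (F : T -> R) b : \sum_y F y * (y == b)%:R = F b.
Proof.
rewrite (bigD1 b) //= eqxx mulr1 big1 ?addr0 // => y /negbTE ->; exact: mulr0.
Qed.

Lemma smu_delta x b z :
  smu (del x) b z = \sum_y (if mul x y == z then alpha x y * b y else 0).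
Proof.
rewrite smulE (bigD1 x) //= [X in _ + X]big1 ?addr0; last first.
  by move=> x' nx; apply: big1 => y _; rewrite ffunE (negbTE nx) mulr0 mul0r if_same.
by apply: eq_bigr => y _; rewrite ffunE eqxx mulr1.
Qed.

Lemma smu_sum a b z : smu a b z = \sum_x a x * smu (del x) b z.
Proof.
rewrite smulE; apply: eq_bigr => x _; rewrite smu_delta mulr_sumr.
apply: eq_bigr => y _; case: ifP => _; last by rewrite mulr0.
by rewrite mulrA [a x * _]mulrC.
Qed.

Lemma smu_BC x (p : BL) (a b : BM p) z : smu (del x) (BC p a b) z =
  \sum_(g : GTD (tag p)) c _ _ a.2 b.2 g *
     (alpha x (blkS (val a.1) (val g) (val b.1)) *
      (mul x (blkS (val a.1) (val g) (val b.1)) == z)%:R).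
Proof.
rewrite smu_delta.
have E y : (if mul x y == z then alpha x y * BC p a b y else 0) =
  \sum_(g : GTD (tag p)) (c _ _ a.2 b.2 g * (if mul x y == z then alpha x y else 0))
     * (y == blkS (val a.1) (val g) (val b.1))%:R.
  rewrite BC_val mulr_sumr; case: ifP => _; last first.
    by rewrite big1 // => g _; rewrite mulr0 mul0r.
  by apply: eq_bigr => g _; rewrite mulrA [alpha x y * _]mulrC.
under eq_bigr do rewrite E.
rewrite exchange_big; apply: eq_bigr => g _.
rewrite sum_ind; congr (_ * _); case: ifP => _; by rewrite ?mulr1 ?mulr0.
Qed.


Lemma gcf_uniq (w : {ffun S -> R}) (D : DC) (Ls Ks : LC D) cg :
  (forall g : GTD D, w (blkS (val Ls) (val g) (val Ks)) = lcA (c (val D)) predT cg g) ->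
  forall l s t, @gcf w D Ls Ks l s t = cg l s t.
Proof.
move=> h; apply: (lcA_uniq (cellD D).2.1).
by rewrite -gcfP; apply/ffunP => g; rewrite ffunE h.
Qed.

Lemma gcf_zero (w : {ffun S -> R}) (D : DC) (Ls Ks : LC D) :
  (forall g : GTD D, w (blkS (val Ls) (val g) (val Ks)) = 0) ->
  forall l s t, @gcf w D Ls Ks l s t = 0.
Proof.
move=> h; apply: (gcf_uniq (cg := fun _ _ _ => 0)) => g.
rewrite h ffunE; symmetry; apply: big1 => l _; apply: big1 => s _; apply: big1 => t _.
exact: mul0r.
Qed.

Lemma low_lc (p : BL) (w : {ffun S -> R}) :
  (forall q a b, ~~ (leB q p && (q != p)) -> @cf w q a b = 0) ->
  w = lcA BC (fun m => leB m p && (m != p)) (cf w).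
Proof.
move=> h; apply/ffunP => z; rewrite {1}(cfP w) !ffunE [RHS]big_mkcond /=.
apply: eq_big => // q _; case: ifP => // hq.
apply: big1 => a _; apply: big1 => b _; by rewrite h ?hq // mul0r.
Qed.

Lemma low_phi (D : DC) (L' Kt : LC D) (P : pred (Lam (val D))) cg (k : R)
    (w : {ffun S -> R}) :
  (forall z, w z = k * \sum_(g' : GTD D) lcA (c (val D)) P cg g' *
                        (z == blkS (val L') (val g') (val Kt))%:R) ->
  (forall q a b, tag q != D -> @cf w q a b = 0) /\
  (forall (l' : Lam (val D)) a b, ~~ P l' ->
     @cf w (Tagged (fun D : DC => Lam (val D)) l') a b = 0).
Proof.
move=> hw; split.
  move=> q a b nq; rewrite /cf; apply: gcf_zero => g; rewrite hw big1 ?mulr0 // => g' _.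
  case: eqP => [e|_]; last by rewrite mulr0.
  have := Dclasses_disj (valP (tag q)) (valP D) (blkDD a.1 b.1 g).
  rewrite e => /(_ (blkDD L' Kt g')) /val_inj eD.
  by move: nq; rewrite eD eqxx.
move=> l' [a1 a2] [b1 b2] nP; rewrite /cf /=.
case: (eqVneq a1 L') => [ea|na]; last first.
  apply: gcf_zero => g /=; rewrite hw big1 ?mulr0 // => g' _.
  case: eqP => [/blkinj [e _ _]|_]; last by rewrite mulr0.
  by move: na; rewrite e eqxx.
case: (eqVneq b1 Kt) => [eb|nb]; last first.
  apply: gcf_zero => g /=; rewrite hw big1 ?mulr0 // => g' _.
  case: eqP => [/blkinj [_ e _]|_]; last by rewrite mulr0.
  by move: nb; rewrite e eqxx.
subst a1 b1.
rewrite (@gcf_uniq w D L' Kt (fun m s t => k * (if P m then cg m s t else 0))).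
  by rewrite (negbTE nP) mulr0.
move=> g; rewrite hw (bigD1 g) //= eqxx mulr1 [X in _ + X]big1 ?addr0; last first.
  move=> g' ng; case: eqP => [/blkinj [_ _ e]|_]; last by rewrite mulr0.
  by move: ng; rewrite e eqxx.
have := lcA_scale (c (val D)) predT k (fun m s t => if P m then cg m s t else 0).
move/(congr1 (fun f : {ffun GTD D -> R} => f g)); rewrite ffunE => <-.
by rewrite lcA_mask.
Qed.


Lemma gmul_delta (D : DC) (hh : GTD D) (f : {ffun GTD D -> R}) g' :
  gmul S mul one R (val D) (delta R _ hh) f g' =
  \sum_(g2 : GTD D) f g2 * (mul (val hh) (val g2) == val g')%:R.
Proof.
rewrite ffunE (bigD1 hh) //= [X in _ + X]big1 ?addr0; last first.
  by move=> g1 ng; apply: big1 => g2 _; rewrite ffunE (negbTE ng) mulr0 mul0r.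
rewrite big_mkcond; apply: eq_bigr => g2 _; rewrite ffunE eqxx mulr1 mul1r.
by case: ifP; rewrite ?mulr1 ?mulr0.
Qed.

Lemma phi_gmul (D : DC) (hh : GTD D) (f : {ffun GTD D -> R}) (L' Kt : LC D) z :
  \sum_(g' : GTD D) gmul S mul one R (val D) (delta R _ hh) f g' *
     (z == blkS (val L') (val g') (val Kt))%:R =
  \sum_(g2 : GTD D) f g2 * (z == blkS (val L') (mul (val hh) (val g2)) (val Kt))%:R.
Proof.
under eq_bigr do rewrite gmul_delta mulr_suml.
rewrite exchange_big; apply: eq_bigr => g2 _.
pose g3 : GTD D := Sub (mul (val hh) (val g2)) (G_mul mulA (@oid D) (valP hh) (valP g2)).
rewrite (bigD1 g3) //= eqxx mulr1 [X in _ + X]big1 ?addr0 //.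
move=> g' ng; case: eqP => [e|_]; last by rewrite mulr0 mul0r.
have eg : g' = g3 by apply: val_inj. 
by rewrite eg eqxx in ng.
Qed.


Lemma ffunB (A B : {ffun S -> R}) z : (A - B) z = A z - B z.
Proof. by rewrite !ffunE. Qed.

Lemma ffunD (T : finType) (A B : {ffun T -> R}) z : (A + B) z = A z + B z.
Proof. by rewrite !ffunE. Qed.

Lemma C3_delta (p : BL) (s : BM p) (x : S) : exists r : BM p -> R, forall t : BM p,
  forall q a b, ~~ (leB q p && (q != p)) ->
    @cf (smu (del x) (BC p s t) - [ffun z => \sum_(s' : BM p) r s' * BC p s' t z]) q a b = 0.
Proof.
case: p s => D l [Ls s0] /=.
have [y0 y0def] : exists y0, y0 = mul x (star (u (val Ls))) by eexists.
have usL : star (u (val Ls)) \in val D :=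
  usD starM (valP D) (@oin D) (@ost D) (@uR D) (valP Ls).
case: (boolP (y0 \in val D)) => hy0; last first.
  exists (fun _ => 0) => -[Kt t0] q a b nlow.
  rewrite /cf; apply: gcf_zero => g.
  rewrite ffunB ffunE big1 ?subr0; last by move=> s' _; rewrite mul0r.
  rewrite smu_BC big1 // => g1 _ /=.
  case: eqP => [ez|_]; last by rewrite !mulr0.
  exfalso; move/negP: nlow; apply.
  have hbl := blkDD Ls Kt g1.
  have z'q : mul x (blkS (val Ls) (val g1) (val Kt)) \in val (tag q) by rewrite ez blkDD.
  have z'nD : mul x (blkS (val Ls) (val g1) (val Kt)) \notin val D.
    apply/negP => hz; move/negP: hy0; apply.
    have hR : Rg mul (mul x (blkS (val Ls) (val g1) (val Kt))) y0.
      rewrite y0def; apply: (Rg_lcong mulA).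
      exact: (blk_R mulA starM (@oid D) (@ost D) (@uR D) (valP Ls) (valP Kt) (valP g1)).
    rewrite (inD (valP D) (@oin D)) in hz; rewrite (inD (valP D) (@oin D)).
    exact: Dg_trans hz (Rg_Dg hR).
  have lt : ltD mul (val (tag q)) (val D).
    rewrite /ltD; apply/andP; split.
      apply/eqP => eq; move: z'q; rewrite eq => h.
      by rewrite h in z'nD.
    apply/existsP; exists (mul x (blkS (val Ls) (val g1) (val Kt))); rewrite z'q /=.
    apply/existsP; exists (blkS (val Ls) (val g1) (val Kt)); rewrite hbl /=.
    by apply/leJgP; exists (Some x), None.
  rewrite /leBig /= lt /=; apply/eqP => eq; move: lt; rewrite eq /= /ltD eqxx //.
have Ly0 : Lg mul y0 (star (u (val Ls))).
  rewrite /Lg y0def leL_mul /=; apply: (stabL mulA); apply: (Dg_leJ mulA).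
  by apply: (mem_Dg (valP D)) => //; rewrite -y0def.
have Le : Lg mul (star (u (val Ls))) (one (val D)).
  by rewrite -{1}(@ost D) (Lg_starE starK starM); apply: (@uR D); exact: valP.
have hK' : Lclass mul y0 \in Lclasses_in mul (val D) := Lclass_inD mul hy0.
have hL' : Lclass mul (star y0) \in Lclasses_in mul (val D) :=
  Lclass_inD mul (star_inD starM (valP D) (@oin D) (@ost D) hy0).
have uK'G : u (Lclass mul y0) \in G mul one (val D).
  rewrite inG; apply/andP; split; first by rewrite Rg_sym; apply: (@uR D).
  have h1 : Lg mul y0 (u (Lclass mul y0)) by have := u_in _ _ (valP D) hK'; rewrite inE.
  apply: (Lg_trans mulA) h1; apply: (Lg_trans mulA) (_ : Lg mul _ (star (u (val Ls)))) _.
    by rewrite Lg_sym.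
  by rewrite Lg_sym.
have gyG := gofG mulA starK starM (valP D) (@oin D) (@oid D) (@ost D) (@uin D) (@uR D) hy0.
have hG := G_mul mulA (@oid D) gyG uK'G.
pose hh : GTD D := Sub (mul (gof mul star one u (val D) y0) (u (Lclass mul y0))) hG.
pose L' : LC D := Sub (Lclass mul (star y0)) hL'.
have y0E : y0 = mul (star (u (val L'))) (val hh).
  have E := blk_gof mulA starK starM (valP D) (@oin D) (@oid D) (@ost D) (@uin D) (@uR D) hy0.
  by rewrite -{1}E /blk -mulA.
have xblk g K : mul x (blkS (val Ls) g K) = blkS (val L') (mul (val hh) g) K.
  by rewrite /blk (mulA x) (mulA x) -y0def y0E (mulA (star (u (val L')))) .
have [_ [_ [_ [_ C3g]]]] := cellD D.
have [rg hrg] := C3g l s0 (delta R _ hh).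
exists (fun s' => (s'.1 == L')%:R * (alpha x (star (u (val Ls))) * rg s'.2)).
move=> [Kt t0]; have [cg hcg] := hrg t0.
move=> q a b nlow.
match goal with |- @cf ?W _ _ _ = 0 => set w := W end.
have hw : forall z, w z = alpha x (star (u (val Ls))) *
    \sum_(g' : GTD D) lcA (c (val D)) (fun m => leLam _ m l && (m != l)) cg g' *
      (z == blkS (val L') (val g') (val Kt))%:R.
  move=> z.
  have lcE g' : lcA (c (val D)) (fun m => leLam _ m l && (m != l)) cg g' =
      gmul S mul one R (val D) (delta R _ hh) (c _ l s0 t0) g' -
      [ffun z => \sum_s' rg s' * c _ l s' t0 z] g'.
    by rewrite hcg ffunD addrAC subrr add0r.
  rewrite (eq_bigr _ (fun g' _ => congr1 (fun v => v * (z == blkS (val L') (val g') (val Kt))%:R) (lcE g'))).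
  under eq_bigr do rewrite mulrBl.
  rewrite sumrB mulrBr /w ffunB; congr (_ - _).
    rewrite phi_gmul smu_BC mulr_sumr; apply: eq_bigr => g _ /=.
    rewrite (alpha_R x _ _ (blk_R mulA starM (@oid D) (@ost D) (@uR D) (valP Ls) (valP Kt) (valP g))).
    by rewrite xblk eq_sym mulrCA.
  rewrite ffunE (sum_pair (A := LC D) (B := M _ l)) (bigD1 L') //=.
  rewrite [X in _ + X]big1 ?addr0; last first.
    by move=> La nL; apply: big1 => s' _; rewrite (negbTE nL) !mul0r.
  under eq_bigr do rewrite eqxx mul1r BC_val /=.
  rewrite mulr_sumr.
  symmetry.
  transitivity (\sum_(g' : GTD D) \sum_(s' : M (val D) l) alpha x (star (u (val Ls))) * rg s' *
      (c (val D) l s' t0 g' * (z == blkS (val L') (val g') (val Kt))%:R)).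
    apply: eq_bigr => g' _; rewrite ffunE mulr_suml mulr_sumr.
    by apply: eq_bigr => s' _; rewrite !mulrA.
  rewrite exchange_big; apply: eq_bigr => s' _.
  by rewrite mulr_sumr.
have [lp1 lp2] := low_phi hw.
move: nlow; case: q a b => [D' l'] a b nlow.
case: (eqVneq D' D) => [eD|nD]; last by apply: lp1.
subst D'; apply: lp2; apply: contra nlow => hP.
rewrite /leBig /= tagged_asE eqxx /= (andP hP).1 orbT /=.
by rewrite eq_Tagged /= (andP hP).2.
Qed.


Lemma C3B (p : BL) (s : BM p) (a : {ffun S -> R}) : exists r : BM p -> R, forall t : BM p,
  exists coef, smu a (BC p s t) =
    [ffun z => \sum_(s' : BM p) r s' * BC p s' t z]
    + lcA BC (fun m => leB m p && (m != p)) coef.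
Proof.
have H := fun x => @C3_delta p s x.
pose rx x := proj1_sig (constructive_indefinite_description _ (H x)).
have rxP x := proj2_sig (constructive_indefinite_description _ (H x)).
exists (fun s' => \sum_x a x * rx x s') => t.
pose w x := smu (del x) (BC p s t) - [ffun z => \sum_(s' : BM p) rx x s' * BC p s' t z].
exists (fun q a' b' => \sum_x a x * @cf (w x) q a' b').
apply/ffunP => z.
rewrite smu_sum ffunD ffunE.
have Ex x : smu (del x) (BC p s t) z =
    (\sum_(s' : BM p) rx x s' * BC p s' t z)
    + lcA BC (fun m => leB m p && (m != p)) (@cf (w x)) z.
  rewrite -(low_lc (rxP x t)) /w ffunB.
  by rewrite addrC [X in _ - X + _]ffunE subrK.
under eq_bigr do rewrite Ex mulrDr.
rewrite big_split; congr (_ + _).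
  under eq_bigr do rewrite mulr_sumr.
  rewrite exchange_big; apply: eq_bigr => s' _.
  by rewrite mulr_suml; apply: eq_bigr => x _; rewrite mulrA.
rewrite -(lcA_sum BC _ (fun x q a' b' => a x * @cf (w x) q a' b')) sum_ffunE.
apply: eq_bigr => x _.
have := congr1 (fun f : {ffun S -> R} => f z)
  (lcA_scale BC (fun m => leB m p && (m != p)) (a x) (@cf (w x))).
by rewrite ffunE => ->.
Qed.

Theorem main_cell : cellular R S smu sst BL leB BM BC.
Proof.
apply: cell_intro.
- by split; [exact: leB_refl | exact: leB_anti | exact: leB_trans].
- exact: indepB.
- exact: spanB.
- by split; [exact: sstar_add | exact: sstar_scale | exact: sstarK | exact: sstar_mul | exact: sstar_BC].
- exact: C3B.
Qed.

End Main.



Unset Implicit Arguments.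

Theorem corollary7
  (S : finType) (mul : S -> S -> S) (star : S -> S)
  (R : comPzRingType) (alpha : S -> S -> R)
  (one : {set S} -> S)
  (Lam : {set S} -> finType) (leLam : forall D, rel (Lam D))
  (M : forall D, Lam D -> finType)
  (c : forall D (l : Lam D), M D l -> M D l -> {ffun GT S mul one D -> R})
  (u : {set S} -> S)
  (* S is a (finite) semigroup *)
  (mulA : forall x y z, mul x (mul y z) = mul (mul x y) z)
  (* * is an anti-involution of S *)
  (starK : forall x, star (star x) = x)
  (starM : forall x y, star (mul x y) = mul (star y) (star x))
  (* alpha is a twisting *)
  (alpha_tw : forall x y z,
     alpha x y * alpha (mul x y) z = alpha x (mul y z) * alpha y z)
  (alpha_star : forall x y, alpha x y = alpha (star y) (star x))
  (* idempotents 1_D *)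
  (one_in : forall D, D \in Dclasses mul -> one D \in D)
  (one_idem : forall D, D \in Dclasses mul -> mul (one D) (one D) = one D)
  (one_star : forall D, D \in Dclasses mul -> star (one D) = one D)
  (alpha_R : forall x y z, Rg mul y z -> alpha x y = alpha x z)
  (* R[G_D] is cellular with cell datum (Lam_D, M_D, C, * ) *)
  (cellG : forall D, D \in Dclasses mul ->
     cellular R (GT S mul one D) (gmul S mul one R D) (gstar S mul star one R D)
       (Lam D) (leLam D) (M D) (c D))
  (* choice of u_L \in L with u_L R 1_D *)
  (u_in : forall D L, D \in Dclasses mul -> L \in Lclasses_in mul D -> u L \in L)
  (u_R : forall D L, D \in Dclasses mul -> L \in Lclasses_in mul D ->
     Rg mul (u L) (one D)) :
  cellular R S (smul S mul R alpha) (sstar S star R)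
    (BigLam S mul Lam) (leBig S mul Lam leLam) (BigM S mul Lam M)
    (BigC S mul star one R Lam M c u).
Proof.
apply: main_cell; assumption.
Qed.
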